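(* Let $\mathcal{Q}=(Q,\leq^Q)$ with $Q=\{1,\dots,k\}$ and $\mathcal{P}=(P,\leq^P)$ be finite posets, $(C_1,\dots,C_w)$ a chain partition of $\mathcal{P}$, $f:Q\to\{1,\dots,w\}$, and $G=G(\mathcal{P},\mathcal{Q},f)$ the graph with vertex set $V_1\,\dot\cup\cdots\dot\cup\, V_k$, $V_i$ a copy of $C_{f(i)}$, where for copies $p\in V_i$, $q\in V_j$ of $p'\in C_{f(i)}$, $q'\in C_{f(j)}$, $pq\in E(G)$ iff $i\neq j$, ($p'\leq^P q'$ iff $i\leq^Q j$) and ($p'\geq^P q'$ iff $i\geq^Q j$). Equip each $V_i$ with the linear order $\leq^G$ inherited from the chain $C_{f(i)}$ under $\leq^P$. Let $i,j\in Q$ with $i\neq j$. Then: (i) for any $p\in V_i$ and $q_1,q_2,q_3\in V_j$ with $q_1\leq^G q_2\leq^G q_3$, if $pq_1,pq_3\in E(G)$ then $pq_2\in E(G)$; (ii) for any $p_1,p_2\in V_i$ and $q_1,q_2\in V_j$ with $p_1\leq^G p_2$ and $q_1\leq^G q_2$, if $p_1q_2,p_2q_1\in E(G)$ then $p_1q_1,p_2q_2\in E(G)$.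
   Context: A chain partition of $\mathcal{P}$ is a partition of $P$ into chains (sets of pairwise comparable elements under $\leq^P$). *)

(* Defs.v *)
From HB Require Import structures.
From mathcomp Require Import all_boot all_order.
Set Implicit Arguments. Unset Strict Implicit. Unset Printing Implicit Defensive.
Import Order.TTheory.
Local Open Scope order_scope.

Definition is_poset (T : finType) (le : rel T) : Prop :=
  reflexive le /\ antisymmetric le /\ transitive le.

Definition is_chain d (P : finPOrderType d) (A : {set P}) : Prop :=
  forall x y, x \in A -> y \in A -> (x <= y) || (y <= x).

Definition chain_partition d (P : finPOrderType d) (w : nat)
    (C : 'I_w -> {set P}) : Prop :=
  [/\ forall a, C a != set0,
      forall a b, a != b -> [disjoint C a & C b],
      forall x : P, exists a, x \in C a
    & forall a, is_chain (C a)].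

(* Vertices of G(P,Q,f) are pairs (i, p) with p \in C (f i) (a copy of p in V_i).
   Adjacency of (i,p) and (j,q). *)
Definition G_edge d (P : finPOrderType d) (k : nat) (leQ : rel 'I_k)
    (x y : 'I_k * P) : bool :=
  [&& x.1 != y.1,
      (x.2 <= y.2) == leQ x.1 y.1
    & (y.2 <= x.2) == leQ y.1 x.1].

(* Main.v *)
Require Import Defs.
From HB Require Import structures.
From mathcomp Require Import all_boot all_order.
Local Open Scope order_scope.
Import Order.TTheory.

Theorem lemma4p2 (k : nat) (leQ : rel 'I_k) (d : Order.disp_t)
    (P : finPOrderType d) (w : nat) (C : 'I_w -> {set P}) (f : 'I_k -> 'I_w) :
  is_poset leQ -> chain_partition C ->
  forall i j : 'I_k, i != j ->
  (forall (p q1 q2 q3 : P),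
      p \in C (f i) -> q1 \in C (f j) -> q2 \in C (f j) -> q3 \in C (f j) ->
      q1 <= q2 -> q2 <= q3 ->
      G_edge leQ (i, p) (j, q1) -> G_edge leQ (i, p) (j, q3) ->
      G_edge leQ (i, p) (j, q2)) /\
  (forall (p1 p2 q1 q2 : P),
      p1 \in C (f i) -> p2 \in C (f i) -> q1 \in C (f j) -> q2 \in C (f j) ->
      p1 <= p2 -> q1 <= q2 ->
      G_edge leQ (i, p1) (j, q2) -> G_edge leQ (i, p2) (j, q1) ->
      G_edge leQ (i, p1) (j, q1) /\ G_edge leQ (i, p2) (j, q2)).
Proof.
move=> _ _ i j ij; split.
  move=> p q1 q2 q3 _ _ _ _ h12 h23.
  rewrite /G_edge /= ij /=.
  move=> /andP[/eqP e1 /eqP e1'] /andP[/eqP e3 /eqP e3'].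
  have -> : (p <= q2) = (p <= q1).
    case A: (p <= q1); first by rewrite (le_trans A h12).
    apply/negbTE/negP => B; move: (le_trans B h23); rewrite e3 -e1 A.
    by [].
  have -> : (q2 <= p) = (q3 <= p).
    case A: (q3 <= p); first by rewrite (le_trans h23 A).
    apply/negbTE/negP => B; move: (le_trans h12 B); rewrite e1' -e3' A.
    by [].
  by rewrite e1 e3' !eqxx.
move=> p1 p2 q1 q2 _ _ _ _ h1 h2.
rewrite /G_edge /= ij /=.
move=> /andP[/eqP e1 /eqP e1'] /andP[/eqP e2 /eqP e2'].
have -> : (p1 <= q1) = (p2 <= q1).
  case A: (p2 <= q1); first by rewrite (le_trans h1 A).
  apply/negbTE/negP => B; move: (le_trans B h2); rewrite e1 -e2 A.
  by [].
have -> : (q1 <= p1) = (q2 <= p1).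
  case A: (q2 <= p1); first by rewrite (le_trans h2 A).
  apply/negbTE/negP => B; move: (le_trans B h1); rewrite e2' -e1' A.
  by [].
have -> : (p2 <= q2) = (p1 <= q2).
  case A: (p1 <= q2).
    by move: A; rewrite e1 -e2 => A; rewrite (le_trans A h2).
  apply/negbTE/negP => B; move: (le_trans h1 B); rewrite A.
  by [].
have -> : (q2 <= p2) = (q1 <= p2).
  case A: (q1 <= p2).
    by move: A; rewrite e2' -e1' => A; rewrite (le_trans A h1).
  apply/negbTE/negP => B; move: (le_trans h2 B); rewrite A.
  by [].
by rewrite e2 e1 e1' e2' !eqxx.
Qed.
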